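(* Assume $J$ is nondecreasing on $\Theta$. Define $\Phi(\theta_0)=\int_{\theta_0}^{\bar\theta}J(\theta)F(\theta)\,dF(\theta)+v(\theta_0)(1-F(\theta_0))$ for $\theta_0\in[0,\bar\theta)$, and let $\theta_0^*\in\arg\max_{\theta_0\in[0,\bar\theta)}\Phi(\theta_0)$. Then the pair $(\theta_0^*,s^* )$ with $s^*(\theta)=F(\theta)$ for $\theta\in[\theta_0^*,\bar\theta]$ maximizes $$R(\theta_0,s)=\int_{\theta_0}^{\bar\theta}J(\theta)s(\theta)\,dF(\theta)+v(\theta_0)(1-F(\theta_0))$$ over all $\theta_0\in[0,\bar\theta)$ and $s\in\mathcal S(\theta_0)$; i.e., the revenue-maximizing mechanism excludes types below $\theta_0^*$ and fully separates types above $\theta_0^*$.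
   Context: Let $0<\bar\theta<\infty$, $\Theta=[0,\bar\theta]$, $F$ a cdf on $\Theta$ with continuous, strictly positive density $f$, $dF=f\,d\theta$, and $J(\theta)=\theta-\frac{1-F(\theta)}{f(\theta)}$. The intrinsic value $v:\Theta\to[0,\infty)$ is twice continuously differentiable with $v'\ge0$, $v''\le0$. For $\theta_0\in[0,\bar\theta)$ and bounded measurable $a,b:[\theta_0,\bar\theta]\to\mathbb R$, write $b\in\mathrm{MPS}(a)$ on $[\theta_0,\bar\theta]$ if $\int_x^{\bar\theta}b\,dF\le\int_x^{\bar\theta}a\,dF$ for all $x\in[\theta_0,\bar\theta]$, with equality at $x=\theta_0$. Let $\mathcal S(\theta_0)$ be the set of nondecreasing $s:[\theta_0,\bar\theta]\to[0,1]$ with $s\in\mathrm{MPS}(F)$ on $[\theta_0,\bar\theta]$ (the feasible interim statuses of participants when types below $\theta_0$ are excluded). $R(\theta_0,s)$ is the seller's expected revenue of the optimal-price incentive-compatible, individually rational mechanism with participation cutoff $\theta_0$ and interim status $s$. *)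

(* Defs.v *)
From Stdlib Require Import Reals Lra.
From Coquelicot Require Import Coquelicot.
Open Scope R_scope.

Definition cont_on (a b : R) (g : R -> R) : Prop :=
  forall x, a <= x <= b ->
    forall eps : R, 0 < eps -> exists delta : R, 0 < delta /\
      forall y, a <= y <= b -> Rabs (y - x) < delta -> Rabs (g y - g x) < eps.

Definition cdf_with_density (tb : R) (F f : R -> R) : Prop :=
  cont_on 0 tb f /\
  (forall x, 0 <= x <= tb -> 0 < f x) /\
  (forall x, 0 <= x <= tb -> F x = RInt f 0 x) /\
  F tb = 1.

Definition Jvv (F f : R -> R) (x : R) : R := x - (1 - F x) / f x.

(* v : Θ -> [0,∞) twice continuously differentiable on [0,tb], v' >= 0, v'' <= 0.
   C^2 on the closed interval: derivatives on the interior, with v, v', v''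
   continuous (extending continuously) on [0,tb]. *)
Definition intrinsic_value (tb : R) (v : R -> R) : Prop :=
  (forall x, 0 <= x <= tb -> 0 <= v x) /\
  exists v1 v2 : R -> R,
    (forall x, 0 < x < tb -> is_derive v x (v1 x) /\ is_derive v1 x (v2 x)) /\
    cont_on 0 tb v /\ cont_on 0 tb v1 /\ cont_on 0 tb v2 /\
    (forall x, 0 <= x <= tb -> 0 <= v1 x) /\
    (forall x, 0 <= x <= tb -> v2 x <= 0).

(* ∫_x^tb g dF = ∫_x^tb g(θ) f(θ) dθ *)
Definition intF (f g : R -> R) (x tb : R) : R := RInt (fun t => g t * f t) x tb.

Definition MPS (tb : R) (f : R -> R) (t0 : R) (b a : R -> R) : Prop :=
  (forall x, t0 <= x <= tb -> intF f b x tb <= intF f a x tb) /\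
  intF f b t0 tb = intF f a t0 tb.

Definition feasible (tb : R) (F f : R -> R) (t0 : R) (s : R -> R) : Prop :=
  (forall x y, t0 <= x -> x <= y -> y <= tb -> s x <= s y) /\
  (forall x, t0 <= x <= tb -> 0 <= s x <= 1) /\
  MPS tb f t0 s F.

Definition revenue (tb : R) (F f v : R -> R) (t0 : R) (s : R -> R) : R :=
  intF f (fun t => Jvv F f t * s t) t0 tb + v t0 * (1 - F t0).

Definition Phi (tb : R) (F f v : R -> R) (t0 : R) : R :=
  intF f (fun t => Jvv F f t * F t) t0 tb + v t0 * (1 - F t0).

(* Main.v *)
Require Import Defs.
From Coquelicot Require Import Coquelicot.
From Stdlib Require Import Reals Lra ZArith.
Open Scope R_scope.
Section W.
Variables (f g : R -> R) (a b c l : R).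
Lemma exP : ex_RInt f a b -> ex_RInt g a b -> ex_RInt (fun x => f x + g x) a b.
Proof. intros; apply (@ex_RInt_plus R_NormedModule); auto. Qed.
Lemma exM : ex_RInt f a b -> ex_RInt g a b -> ex_RInt (fun x => f x - g x) a b.
Proof. intros; apply (@ex_RInt_minus R_NormedModule); auto. Qed.
Lemma exS : ex_RInt f a b -> ex_RInt (fun x => l * f x) a b.
Proof. intros; apply (@ex_RInt_scal R_NormedModule); auto. Qed.
Lemma RP : ex_RInt f a b -> ex_RInt g a b -> RInt (fun x => f x + g x) a b = RInt f a b + RInt g a b.
Proof. intros; apply (@RInt_plus R_CompleteNormedModule); auto. Qed.
Lemma RM : ex_RInt f a b -> ex_RInt g a b -> RInt (fun x => f x - g x) a b = RInt f a b - RInt g a b.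
Proof. intros; apply (@RInt_minus R_CompleteNormedModule); auto. Qed.
Lemma RS : ex_RInt f a b -> RInt (fun x => l * f x) a b = l * RInt f a b.
Proof. intros; apply (@RInt_scal R_CompleteNormedModule); auto. Qed.
Lemma RC : ex_RInt f a b -> ex_RInt f b c -> RInt f a b + RInt f b c = RInt f a c.
Proof. intros; apply (@RInt_Chasles R_CompleteNormedModule); auto. Qed.
Lemma RK : RInt (fun _ => l) a b = (b - a) * l.
Proof. apply (@RInt_const R_CompleteNormedModule). Qed.
Lemma exE : (forall x, Rmin a b < x < Rmax a b -> f x = g x) -> ex_RInt f a b -> ex_RInt g a b.
Proof. apply (@ex_RInt_ext R_NormedModule). Qed.
Lemma RE : (forall x, Rmin a b < x < Rmax a b -> f x = g x) -> RInt f a b = RInt g a b.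
Proof. apply (@RInt_ext R_CompleteNormedModule). Qed.
End W.

Lemma exC1 (f : R -> R) a b c : a <= b <= c -> ex_RInt f a c -> ex_RInt f a b.
Proof. apply (@ex_RInt_Chasles_1 R_CompleteNormedModule). Qed.
Lemma exC2 (f : R -> R) a b c : a <= b <= c -> ex_RInt f a c -> ex_RInt f b c.
Proof. apply (@ex_RInt_Chasles_2 R_CompleteNormedModule). Qed.

Definition clamp (a b x : R) : R := Rmax a (Rmin b x).

Lemma cl_in a b x : a <= b -> a <= clamp a b x <= b.
Proof. intros H; unfold clamp, Rmax, Rmin; repeat destruct Rle_dec; lra. Qed.
Lemma cl_id a b x : a <= x <= b -> clamp a b x = x.
Proof. intros H; unfold clamp, Rmax, Rmin; repeat destruct Rle_dec; lra. Qed.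
Lemma cl_mono a b x y : a <= b -> x <= y -> clamp a b x <= clamp a b y.
Proof. intros H H'; unfold clamp, Rmax, Rmin; repeat destruct Rle_dec; lra. Qed.
Lemma cl_lip a b x y : a <= b -> Rabs (clamp a b y - clamp a b x) <= Rabs (y - x).
Proof. intros H; unfold clamp, Rmax, Rmin, Rabs; repeat destruct Rle_dec; repeat destruct Rcase_abs; lra. Qed.

Lemma nat_big r : exists n : nat, r < INR n.
Proof.
  destruct (archimed r) as [H1 H2].
  destruct (Rle_or_lt 0 r).
  - exists (Z.to_nat (up r)). rewrite INR_IZR_INZ, Z2Nat.id; [lra|].
    apply le_IZR. lra.
  - exists 0%nat. simpl. lra.
Qed.

Definition ind (phi : R -> R) (L x : R) : R := if Rle_dec L (phi x) then 1 else 0.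

Lemma lvl (phi h : R -> R) a b L : a <= b -> (forall x y, x <= y -> phi x <= phi y) ->
  ex_RInt h a b ->
  ex_RInt (fun x => ind phi L x * h x) a b /\
  exists c, a <= c <= b /\ RInt (fun x => ind phi L x * h x) a b = RInt h c b.
Proof.
  intros Hab Hm Hh.
  set (E := fun x => x = a \/ (x <= b /\ phi x < L)).
  destruct (completeness E) as [m [Hub Hlub]].
  { exists b. intros x [->|[? ?]]; lra. }
  { exists a. left. reflexivity. }
  assert (Ham : a <= m) by (apply Hub; left; reflexivity).
  assert (Hmb : m <= b) by (apply Hlub; intros x [->|[? ?]]; lra).
  assert (H1 : forall x, m < x < b -> ind phi L x * h x = h x).
  { intros x Hx. unfold ind. destruct Rle_dec as [|n]; [ring|].
    exfalso. assert (E x) by (right; split; lra). specialize (Hub x H). lra. }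
  assert (H0 : forall x, a < x < m -> ind phi L x * h x = 0).
  { intros x Hx. unfold ind. destruct Rle_dec as [r|]; [|ring].
    exfalso. assert (m <= x); [|lra]. apply Hlub. intros y [->|[Hy1 Hy2]]; [lra|].
    destruct (Rle_or_lt y x); auto. specialize (Hm x y ltac:(lra)). lra. }
  assert (Ea : ex_RInt (fun x => ind phi L x * h x) a m).
  { apply exE with (fun _ => 0). 2: apply ex_RInt_const.
    intros x Hx. rewrite Rmin_left, Rmax_right in Hx by lra. symmetry; apply H0; lra. }
  assert (Hhm : ex_RInt h m b) by (apply exC2 with a; [lra|exact Hh]).
  assert (Eb : ex_RInt (fun x => ind phi L x * h x) m b).
  { apply exE with h. 2: exact Hhm.
    intros x Hx. rewrite Rmin_left, Rmax_right in Hx by lra. symmetry; apply H1; lra. }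
  split. { apply ex_RInt_Chasles with m; assumption. }
  exists m. split; [lra|].
  rewrite <- (RInt_Chasles _ a m b Ea Eb).
  rewrite (RInt_ext _ (fun _ => 0) a m).
  2:{ intros x Hx. rewrite Rmin_left, Rmax_right in Hx by lra. apply H0; lra. }
  rewrite (RInt_ext _ h m b).
  2:{ intros x Hx. rewrite Rmin_left, Rmax_right in Hx by lra. apply H1; lra. }
  rewrite RInt_const. change (scal (m - a) 0 + RInt h m b = RInt h m b).
  change (scal (m - a) 0) with ((m-a)*0). ring.
Qed.

Fixpoint stp (d : R) (N : nat) (y : R) : R :=
  match N with
  | O => 0
  | S k => stp d k y + d * (if Rle_dec (INR (S k) * d) y then 1 else 0)
  end.

Lemma stp_approx d N y : 0 < d -> 0 <= y ->
  (y <= INR N * d -> y - d <= stp d N y <= y) /\ (INR N * d <= y -> stp d N y = INR N * d).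
Proof.
  intros Hd Hy. induction N as [|k IH].
  - simpl. split; intros; lra.
  - cbn [stp]. rewrite S_INR in *. destruct IH as [IH1 IH2].
    destruct Rle_dec as [r|r].
    + rewrite IH2 by lra. split; intros; lra.
    + split; intros.
      * destruct (Rle_or_lt y (INR k * d)). specialize (IH1 H0). lra.
        rewrite IH2 by lra. lra.
      * lra.
Qed.

Lemma stp_int (phi h : R -> R) a b d N : a <= b -> (forall x y, x <= y -> phi x <= phi y) ->
  ex_RInt h a b ->
  ex_RInt (fun x => stp d N (phi x) * h x) a b /\
  ((forall c, a <= c <= b -> 0 <= RInt h c b) -> 0 <= d ->
     0 <= RInt (fun x => stp d N (phi x) * h x) a b).
Proof.
  intros Hab Hm Hh. induction N as [|k [IH1 IH2]].
  - cbn [stp]. split.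
    + apply exE with (fun _ => 0). 2: apply ex_RInt_const. intros x _; symmetry; apply Rmult_0_l.
   
    + intros _ _. rewrite (RInt_ext _ (fun _ => 0)). 2: intros x _; apply Rmult_0_l.
      rewrite RInt_const. change (scal (b - a) 0) with ((b-a)*0). lra.
  - destruct (lvl phi h a b (INR (S k) * d) Hab Hm Hh) as [E1 [c [Hc Ec]]].
    assert (Heq : forall x, stp d (S k) (phi x) * h x =
       stp d k (phi x) * h x + d * (ind phi (INR (S k) * d) x * h x)).
    { intros x. cbn [stp]. unfold ind. ring. }
    split.
    + apply exE with (fun x => stp d k (phi x) * h x + d * (ind phi (INR (S k) * d) x * h x)).
      { intros; symmetry; apply Heq. }
      apply exP; [exact IH1|]. apply exS. exact E1.
    + intros HG Hd. rewrite (RE _ (fun x => stp d k (phi x) * h x + d * (ind phi (INR (S k) * d) x * h x))).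
      2: intros; apply Heq.
      rewrite RP; [|exact IH1|apply exS; exact E1].
      rewrite RS by exact E1. rewrite Ec.
      specialize (IH2 HG Hd). specialize (HG c Hc).
      assert (0 <= d * RInt h c b) by (apply Rmult_le_pos; lra). lra.
Qed.

Lemma bound_of (h : R -> R) a b : a <= b -> ex_RInt h a b ->
  exists M, 0 <= M /\ forall t, a <= t <= b -> Rabs (h t) <= M.
Proof.
  intros Hab Hh. destruct (ex_RInt_ub h a b Hh) as [M HM].
  exists (Rabs M). split; [apply Rabs_pos|]. intros t Ht.
  assert (Rmin a b <= t <= Rmax a b) by (rewrite Rmin_left, Rmax_right; lra).
  specialize (HM t H). change (norm (h t)) with (Rabs (h t)) in HM.
  pose proof (Rle_abs M). lra.
Qed.

Lemma intA (phi h : R -> R) a b D : a <= b -> (forall x y, x <= y -> phi x <= phi y) ->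
  (forall x, 0 <= phi x <= D) -> ex_RInt h a b ->
  ex_RInt (fun x => phi x * h x) a b.
Proof.
  intros Hab Hm HD Hh.
  set (hc := fun x => h (clamp a b x)).
  assert (Hhc : ex_RInt hc a b).
  { apply exE with h; [|exact Hh]. intros x Hx.
    rewrite Rmin_left, Rmax_right in Hx by lra. unfold hc. rewrite cl_id; lra. }
  destruct (bound_of h a b Hab Hh) as [M [HM0 HM]].
  assert (HMc : forall x, Rabs (hc x) <= M).
  { intros x. unfold hc. apply HM. apply cl_in; lra. }
  set (dn := fun n : nat => (D + 1) / (INR n + 1)).
  assert (Hdn : forall n, 0 < dn n).
  { intros n. unfold dn. pose proof (pos_INR n). assert (0 <= D) by (specialize (HD 0); lra).
    apply Rdiv_lt_0_compat; lra. }
  assert (Happ : forall n x, Rabs (stp (dn n) (S n) (phi x) - phi x) <= dn n).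
  { intros n x. destruct (stp_approx (dn n) (S n) (phi x) (Hdn n) (proj1 (HD x))) as [A1 _].
    assert (phi x <= INR (S n) * dn n).
    { rewrite S_INR. unfold dn. field_simplify. 2: pose proof (pos_INR n); lra.
      specialize (HD x). lra. }
    specialize (A1 H). unfold Rabs; destruct Rcase_abs; lra. }
  destruct (filterlim_RInt (V := R_CompleteNormedModule)
     (fun n x => stp (dn n) (S n) (phi x) * hc x) a b Hierarchy.eventually eventually_filter
     (fun x => phi x * hc x)
     (fun n => RInt (fun x => stp (dn n) (S n) (phi x) * hc x) a b)) as [If [_ HIf]].
  - intros n. apply (RInt_correct (V := R_CompleteNormedModule)).
    apply (stp_int phi hc a b (dn n) (S n) Hab Hm Hhc).
  - apply filterlim_locally. intros eps.
    destruct (nat_big ((D + 1) * (M + 1) / eps)) as [n0 Hn0].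
    exists n0. intros n Hn. intros t. change (Rabs (stp (dn n) (S n) (phi t) * hc t - phi t * hc t) < eps).
    replace (stp (dn n) (S n) (phi t) * hc t - phi t * hc t) with
      ((stp (dn n) (S n) (phi t) - phi t) * hc t) by ring.
    rewrite Rabs_mult.
    assert (Rabs (stp (dn n) (S n) (phi t) - phi t) * Rabs (hc t) <= dn n * M).
    { apply Rmult_le_compat; try apply Rabs_pos; auto. }
    assert (dn n * M < eps); [|lra].
    pose proof (cond_pos eps). pose proof (le_INR _ _ Hn).
    assert (0 <= D) by (specialize (HD 0); lra).
    assert (Hq : (D + 1) * (M + 1) < eps * INR n).
    { apply Rmult_lt_reg_r with (/ eps). apply Rinv_0_lt_compat; lra.
      replace (eps * INR n * / eps) with (INR n) by (field; lra). unfold Rdiv in Hn0. lra. }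
    unfold dn. apply Rmult_lt_reg_r with (INR n + 1). pose proof (pos_INR n); lra.
    replace ((D + 1) / (INR n + 1) * M * (INR n + 1)) with ((D+1) * M) by (field; pose proof (pos_INR n); lra).
    nra.
  - apply exE with (fun x => phi x * hc x). 2: exists If; exact HIf.
    intros x Hx. rewrite Rmin_left, Rmax_right in Hx by lra. unfold hc. rewrite cl_id; lra.
Qed.

Lemma intB (phi h : R -> R) a b D : a <= b -> (forall x y, x <= y -> phi x <= phi y) ->
  (forall x, 0 <= phi x <= D) -> ex_RInt h a b ->
  (forall c, a <= c <= b -> 0 <= RInt h c b) ->
  0 <= RInt (fun x => phi x * h x) a b.
Proof.
  intros Hab Hm HD Hh HG.
  pose proof (intA phi h a b D Hab Hm HD Hh) as HA.
  destruct (bound_of h a b Hab Hh) as [M [HM0 HM]].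
  set (I := RInt (fun x => phi x * h x) a b).
  destruct (Rle_or_lt 0 I) as [|HI]; [assumption|exfalso].
  set (d := - I / ((b - a) * M + 1)).
  assert (Hpos : 0 < (b - a) * M + 1) by nra.
  assert (Hd : 0 < d) by (unfold d; apply Rdiv_lt_0_compat; lra).
  assert (HD0 : 0 <= D) by (specialize (HD 0); lra).
  destruct (nat_big (D / d)) as [N HN].
  assert (HND : D <= INR N * d).
  { apply Rmult_lt_compat_r with (r := d) in HN; [|lra].
    unfold Rdiv in HN. rewrite Rmult_assoc, Rinv_l in HN by lra. lra. }
  destruct (stp_int phi h a b d N Hab Hm Hh) as [S1 S2].
  specialize (S2 HG ltac:(lra)).
  assert (Hdiff : Rabs (RInt (fun x => phi x * h x - stp d N (phi x) * h x) a b) <= (b - a) * (d * M)).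
  { apply abs_RInt_le_const; [lra| apply exM; assumption|].
    intros t Ht. replace (phi t * h t - stp d N (phi t) * h t) with ((phi t - stp d N (phi t)) * h t) by ring.
    rewrite Rabs_mult. apply Rmult_le_compat; try apply Rabs_pos; auto.
    destruct (stp_approx d N (phi t) Hd (proj1 (HD t))) as [A1 _].
    specialize (HD t). specialize (A1 ltac:(lra)). unfold Rabs; destruct Rcase_abs; lra. }
  rewrite RM in Hdiff by assumption. fold I in Hdiff.
  assert (Hk : (b - a) * (d * M) < - I).
  { unfold d. replace ((b - a) * (- I / ((b - a) * M + 1) * M)) with
      (-I * ((b - a) * M / ((b - a) * M + 1))) by (field; lra).
    assert ((b - a) * M / ((b - a) * M + 1) < 1).
    { apply Rmult_lt_reg_r with ((b - a) * M + 1); [lra|].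
      unfold Rdiv; rewrite Rmult_assoc, Rinv_l by lra. lra. }
    nra. }
  apply Rabs_le_between in Hdiff. lra.
Qed.


Lemma cont_ex (g : R -> R) a b : a <= b -> cont_on a b g -> ex_RInt g a b.
Proof.
  intros Hab Hc.
  set (gc := fun x => g (clamp a b x)).
  assert (Hgc : ex_RInt gc a b).
  { apply (ex_RInt_continuous (V := R_CompleteNormedModule)). intros z _.
    apply (proj2 (filterlim_locally _ _)). intros eps.
    destruct (Hc (clamp a b z) (cl_in a b z Hab) eps (cond_pos eps)) as [d [Hd Hd2]].
    exists (mkposreal d Hd). intros y Hy. change (Rabs (y - z) < d) in Hy.
    change (Rabs (gc y - gc z) < eps). unfold gc. apply Hd2. apply cl_in; lra.
    pose proof (cl_lip a b z y Hab). lra. }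
  apply exE with gc; [|exact Hgc]. intros x Hx.
  rewrite Rmin_left, Rmax_right in Hx by lra. unfold gc. rewrite cl_id; lra.
Qed.

Theorem proposition1 (tb : R) (F f v : R -> R) (t0star : R) :
  0 < tb ->
  cdf_with_density tb F f ->
  intrinsic_value tb v ->
  (forall x y, 0 <= x -> x <= y -> y <= tb -> Jvv F f x <= Jvv F f y) ->
  0 <= t0star < tb ->
  (forall t0, 0 <= t0 < tb -> Phi tb F f v t0 <= Phi tb F f v t0star) ->
  feasible tb F f t0star F /\
  (forall t0 (s : R -> R), 0 <= t0 < tb -> feasible tb F f t0 s ->
     revenue tb F f v t0 s <= revenue tb F f v t0star F).
Proof.
  intros Htb [Hfc [Hfp [HF HF1]]] _ HJ Hts Hphi.
  assert (Hf0 : ex_RInt f 0 tb) by (apply cont_ex; [lra|exact Hfc]).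
  assert (HFmon : forall x y, 0 <= x -> x <= y -> y <= tb -> F x <= F y).
  { intros x y H1 H2 H3. rewrite (HF x), (HF y) by lra.
    assert (E1 : ex_RInt f 0 x) by (apply exC1 with tb; [lra|exact Hf0]).
    assert (E2 : ex_RInt f x y).
    { apply exC1 with tb; [lra|]. apply exC2 with 0; [lra|exact Hf0]. }
    rewrite <- (RC f 0 x y E1 E2).
    assert (0 <= RInt f x y); [|lra].
    apply RInt_ge_0; auto. intros z Hz. apply Rlt_le, Hfp. lra. }
  assert (HF0 : F 0 = 0).
  { rewrite HF by lra. apply (@RInt_point R_CompleteNormedModule). }
  assert (HF01 : forall x, 0 <= x <= tb -> 0 <= F x <= 1).
  { intros x Hx. split. rewrite <- HF0. apply HFmon; lra.
    rewrite <- HF1. apply HFmon; lra. }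
  split.
  { split; [|split].
    - intros x y H1 H2 H3. apply HFmon; lra.
    - intros x Hx. apply HF01; lra.
    - split; [intros; lra|reflexivity]. }
  intros t0 s Ht0 [Hsm [Hs01 [HMPS1 HMPS2]]].
  assert (Hab : t0 <= tb) by lra.
  assert (Hcl : forall x, t0 <= clamp t0 tb x <= tb) by (intros; apply cl_in; lra).
  assert (Hcid : forall x, Rmin t0 tb < x < Rmax t0 tb -> clamp t0 tb x = x).
  { intros x Hx. rewrite Rmin_left, Rmax_right in Hx by lra. apply cl_id; lra. }
  assert (Hf : ex_RInt f t0 tb) by (apply exC2 with 0; [lra|exact Hf0]).
  assert (Ms : forall x y, x <= y -> s (clamp t0 tb x) <= s (clamp t0 tb y)).
  { intros x y Hxy. pose proof (Hcl x); pose proof (Hcl y).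
    pose proof (cl_mono t0 tb x y Hab Hxy). apply Hsm; lra. }
  assert (Bs : forall x, 0 <= s (clamp t0 tb x) <= 1) by (intros; apply Hs01, Hcl).
  assert (MF : forall x y, x <= y -> F (clamp t0 tb x) <= F (clamp t0 tb y)).
  { intros x y Hxy. pose proof (Hcl x); pose proof (Hcl y).
    pose proof (cl_mono t0 tb x y Hab Hxy). apply HFmon; lra. }
  assert (BF : forall x, 0 <= F (clamp t0 tb x) <= 1) by (intros; apply HF01; pose proof (Hcl x); lra).
  assert (Mi : forall x y, x <= y -> clamp t0 tb x <= clamp t0 tb y) by (intros; apply cl_mono; lra).
  assert (Bi : forall x, 0 <= clamp t0 tb x <= tb) by (intros x; pose proof (Hcl x); lra).
  assert (MJ : forall x y, x <= y -> Jvv F f (clamp t0 tb x) - Jvv F f t0 <= Jvv F f (clamp t0 tb y) - Jvv F f t0).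
  { intros x y Hxy. pose proof (Hcl x); pose proof (Hcl y).
    pose proof (cl_mono t0 tb x y Hab Hxy). assert (Jvv F f (clamp t0 tb x) <= Jvv F f (clamp t0 tb y)); [|lra].
    apply HJ; lra. }
  assert (BJ : forall x, 0 <= Jvv F f (clamp t0 tb x) - Jvv F f t0 <= Jvv F f tb - Jvv F f t0).
  { intros x. pose proof (Hcl x). split.
    assert (Jvv F f t0 <= Jvv F f (clamp t0 tb x)) by (apply HJ; lra). lra.
    assert (Jvv F f (clamp t0 tb x) <= Jvv F f tb) by (apply HJ; lra). lra. }
  assert (EsF : ex_RInt (fun t => s t * f t) t0 tb).
  { apply exE with (fun t => s (clamp t0 tb t) * f t).
    intros x Hx; rewrite Hcid; auto. exact (intA _ _ _ _ _ Hab Ms Bs Hf). }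
  assert (EFf : ex_RInt (fun t => F t * f t) t0 tb).
  { apply exE with (fun t => F (clamp t0 tb t) * f t).
    intros x Hx; rewrite Hcid; auto. exact (intA _ _ _ _ _ Hab MF BF Hf). }
  assert (EF : ex_RInt F t0 tb).
  { apply exE with (fun t => F (clamp t0 tb t) * 1).
    intros x Hx; rewrite Hcid; auto; ring. exact (intA _ _ _ _ _ Hab MF BF (ex_RInt_const _ _ _)). }
  assert (Eif : ex_RInt (fun t => t * f t) t0 tb).
  { apply exE with (fun t => clamp t0 tb t * f t).
    intros x Hx; rewrite Hcid; auto. exact (intA _ _ _ _ _ Hab Mi Bi Hf). }
  assert (EJf : ex_RInt (fun t => Jvv F f t * f t) t0 tb).
  { apply exE with (fun t => t * f t - (1 - F t)).
    intros x Hx. rewrite Rmin_left, Rmax_right in Hx by lra.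
    assert (0 < f x) by (apply Hfp; lra). unfold Jvv. field. lra.
    apply exM; [exact Eif|]. apply exM; [apply ex_RInt_const|exact EF]. }
  assert (EJsf : ex_RInt (fun t => Jvv F f t * s t * f t) t0 tb).
  { apply exE with (fun t => s (clamp t0 tb t) * (Jvv F f t * f t)).
    intros x Hx; rewrite Hcid; auto; ring. exact (intA _ _ _ _ _ Hab Ms Bs EJf). }
  assert (EJFf : ex_RInt (fun t => Jvv F f t * F t * f t) t0 tb).
  { apply exE with (fun t => F (clamp t0 tb t) * (Jvv F f t * f t)).
    intros x Hx; rewrite Hcid; auto; ring. exact (intA _ _ _ _ _ Hab MF BF EJf). }
  set (h := fun t => F t * f t - s t * f t).
  assert (Eh : ex_RInt h t0 tb) by (apply exM; assumption).
  assert (HG : forall c, t0 <= c <= tb -> 0 <= RInt h c tb).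
  { intros c Hc. unfold h. rewrite RM.
    2: apply exC2 with t0; [lra|exact EFf]. 2: apply exC2 with t0; [lra|exact EsF].
    specialize (HMPS1 c Hc). unfold intF in HMPS1. lra. }
  pose proof (intB _ h _ _ _ Hab MJ BJ Eh HG) as Hpos.
  rewrite (RE _ (fun x => (Jvv F f x * F x * f x - Jvv F f x * s x * f x) - Jvv F f t0 * h x)) in Hpos.
  2:{ intros x Hx. rewrite Hcid by auto. unfold h. ring. }
  rewrite RM in Hpos. 2: apply exM; assumption. 2: apply exS; assumption.
  rewrite RM in Hpos by assumption. rewrite RS in Hpos by assumption.
  assert (Hh0 : RInt h t0 tb = 0).
  { unfold h. rewrite RM by assumption. unfold intF in HMPS2. lra. }
  rewrite Hh0 in Hpos.
  specialize (Hphi t0 Ht0).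
  unfold revenue, Phi, intF in *. lra.
Qed.
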